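(* Let $p$ be a prime and $m$ a positive integer with $m+2\le p$. Let $B$ be a finite left brace with $$(B,+)\cong \mathbb{Z}/(p^{\alpha_1})\times\cdots\times\mathbb{Z}/(p^{\alpha_m})$$ for integers $1\le\alpha_1\le\alpha_2\le\cdots\le\alpha_m$. Then $o_{\cdot}(x)=o_{+}(x)$ for every $x\in B$. Moreover, if $(B,\cdot)$ is abelian, then $(B,\cdot)\cong(B,+)$. In particular, if $|B|=p^n$ (and $(B,+)$ is any abelian group of that order) with $n+2\le p$, then $o_{\cdot}(x)=o_{+}(x)$ for every $x\in B$.
   Context: A left brace is a set $B$ with two binary operations $+$ and $\cdot$ such that $(B,+)$ is an abelian group, $(B,\cdot)$ is a group, and $a\cdot(b+c)+a=a\cdot b+a\cdot c$ for all $a,b,c\in B$. For $x\in B$, $o_{\cdot}(x)$ denotes the order of $x$ in the group $(B,\cdot)$ and $o_{+}(x)$ denotes the order of $x$ in the group $(B,+)$. *)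

(* Defs.v *)
From HB Require Import structures.
From mathcomp Require Import all_boot all_order all_algebra.
Set Implicit Arguments. Unset Strict Implicit. Unset Printing Implicit Defensive.
Import GRing.Theory.
Local Open Scope ring_scope.

Definition is_left_brace (B : zmodType) (mul : B -> B -> B) (one : B)
    (inv : B -> B) : Prop :=
  [/\ associative mul, left_id one mul, right_id one mul,
      left_inverse one inv mul /\ right_inverse one inv mul &
      forall a b c : B, mul a (b + c) + a = mul a b + mul a c].

Definition is_order (T : Type) (op : T -> T -> T) (e : T) (x : T) (n : nat)
  : Prop :=
  [/\ (0 < n)%N, iter n (op x) e = e &
      forall k : nat, (0 < k)%N -> iter k (op x) e = e -> (n <= k)%N].

(* (B,+) is isomorphic to Z/(p^a_0) x ... x Z/(p^a_(m-1)) : an additive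
   bijection onto tuples (c_i)_i with 0 <= c_i < p^(a i), added componentwise
   modulo p^(a i). *)
Definition add_iso_prod_cyclic (B : zmodType) (p m : nat) (a : 'I_m -> nat)
  : Prop :=
  exists f : B -> 'I_m -> nat,
    [/\ forall x i, (f x i < p ^ a i)%N,
        forall x y i, f (x + y) i = ((f x i + f y i) %% p ^ a i)%N,
        forall x y, f x =1 f y -> x = y &
        forall g : 'I_m -> nat, (forall i, (g i < p ^ a i)%N) ->
          exists x, f x =1 g].

(* Main.v *)
Require Import Defs.
From HB Require Import structures.
From mathcomp Require Import all_boot all_order all_algebra all_fingroup all_solvable zify.
Import GRing.Theory.
Local Open Scope ring_scope.
Set Implicit Arguments. Unset Strict Implicit. Unset Printing Implicit Defensive.
Section Lin.
Variables (B : zmodType) (s : B -> B).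
Hypothesis sD : forall y z, s (y + z) = s y + s z.
Definition tt_ (y : B) := s y - y.

Lemma s0 : s 0 = 0.
Proof. by have := sD 0 0; rewrite addr0 => /eqP; rewrite -subr_eq subrr eq_sym => /eqP. Qed.
Lemma sN y : s (- y) = - s y.
Proof. by apply/eqP; rewrite -subr_eq0 opprK -sD addNr s0. Qed.
Lemma sMn y k : s (y *+ k) = s y *+ k.
Proof. by elim: k => [|k IH]; rewrite ?mulr0n ?s0 // !mulrS sD IH. Qed.
Lemma tD y z : tt_ (y + z) = tt_ y + tt_ z.
Proof. by rewrite /tt_ sD opprD addrACA. Qed.
End Lin.

Section Iter.
Variables (B : zmodType) (f : B -> B).
Hypothesis fD : forall y z, f (y + z) = f y + f z.
Lemma iterfD k y z : iter k f (y + z) = iter k f y + iter k f z.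
Proof. by elim: k => //= k ->; rewrite fD. Qed.
Lemma iterf0 k : iter k f 0 = 0.
Proof. by elim: k => //= k ->; rewrite (s0 fD). Qed.
Lemma iterfMn k y n : iter k f (y *+ n) = iter k f y *+ n.
Proof. elim: k => //= k ->; by rewrite (sMn fD). Qed.
Lemma iterfsum k n (F : 'I_n -> B) : iter k f (\sum_(i < n) F i) = \sum_(i < n) iter k f (F i).
Proof.
elim: n F => [|n IH] F; first by rewrite !big_ord0 iterf0.
by rewrite !big_ord_recr /= iterfD IH.
Qed.
Lemma fsum n (F : 'I_n -> B) : f (\sum_(i < n) F i) = \sum_(i < n) f (F i).
Proof. exact: (iterfsum 1). Qed.
End Iter.

Section Bin.
Variables (B : zmodType) (s : B -> B).
Hypothesis sD : forall y z, s (y + z) = s y + s z.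
Local Notation t := (tt_ s).
Lemma tD' y z : t (y + z) = t y + t z. Proof. exact: tD. Qed.

Lemma iter_bin j n y : (j < n)%N ->
  iter j s y = \sum_(i < n) iter i t y *+ 'C(j, i).
Proof.
elim: j n => [|j IH] n ltjn.
  case: n ltjn => // n _; rewrite big_ord_recl /= bin0 mulr1n big1 ?addr0 //.
case: n ltjn => // n ltjn.
rewrite /= (IH n.+1 (ltnW ltjn)) (fsum sD).
have -> : \sum_(i < n.+1) s (iter i t y *+ 'C(j, i))
     = \sum_(i < n.+1) (iter i t y *+ 'C(j, i) + iter i.+1 t y *+ 'C(j, i)).
  by apply: eq_bigr => i _; rewrite /= (sMn sD) -mulrnDl /tt_ addrC subrK.
rewrite big_split /= big_ord_recl [X in _ + X = _]big_ord_recr /=.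
rewrite (bin_small (ltjn : (j < n)%N)) mulr0n addr0.
rewrite [RHS]big_ord_recl bin0 [X in _ = _ + X](eq_bigr (fun i : 'I_n =>
   iter (bump 0 i) t y *+ 'C(j, bump 0 i) + iter i.+1 t y *+ 'C(j, i))); last first.
  by move=> i _; rewrite binS mulrnDr.
by rewrite big_split /= bin0 addrA.
Qed.

Lemma sum_bin k y :
  \sum_(j < k) iter j s y = \sum_(i < k) iter i t y *+ 'C(k, i.+1).
Proof.
elim: k => [|k IH]; first by rewrite !big_ord0.
rewrite big_ord_recr /= IH (iter_bin y (ltnSn k)).
rewrite [in RHS](eq_bigr (fun i : 'I_k.+1 => iter i t y *+ 'C(k, i.+1) + iter i t y *+ 'C(k, i))); last first.
  by move=> i _; rewrite binS mulrnDr.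
rewrite big_split /= [X in _ = X + _]big_ord_recr /= bin_small // mulr0n addr0.
by [].
Qed.
End Bin.
Lemma last_nonzero (B : zmodType) (f : B -> B) m w :
  w != 0 -> iter m f w = 0 -> exists d, iter d f w != 0 /\ iter d.+1 f w = 0.
Proof.
elim: m w => [|m IH] w nz /=; first by move=> e; rewrite e eqxx in nz.
rewrite -[f (iter m f w)]/(iter m.+1 f w) iterSr; have [fw0|nzf] := eqVneq (f w) 0.
  by move=> _; exists 0%N; split.
move=> /(IH _ nzf) [d [h1 h2]]; exists d.+1; by rewrite !iterSr.
Qed.

Section Key.
Variables (B : zmodType) (s : B -> B) (p m : nat).
Hypothesis sD : forall y z, s (y + z) = s y + s z.
Hypothesis pp : prime p.
Hypothesis mp : (m + 2 <= p)%N.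
Local Notation t := (tt_ s).
Hypothesis Hnil : forall v, v *+ p = 0 -> iter m t v = 0.
Let tD2 := tD sD.

Lemma binp_split i : (0 < i < p)%N -> 'C(p, i) = ('C(p, i) %/ p * p)%N.
Proof. by move=> h; rewrite divnK // prime_dvd_bin. Qed.

Lemma K1 v : v *+ p = 0 -> \sum_(j < p) iter j s v = 0.
Proof.
move=> vp; rewrite (sum_bin sD).
have [p' pE] : exists p', p = p'.+1 by exists p.-1; rewrite prednK // prime_gt0.
have Hn := Hnil; move: (pp) (mp) vp Hn; rewrite pE => pp' mp' vp Hn.
rewrite big_ord_recr /= big1 ?add0r.
  have -> : p' = (p' - m + m)%N by rewrite subnK //; lia.
  by rewrite iterD Hn // (iterf0 tD2) mul0rn.
move=> [i hi] _ /=; rewrite -pE (binp_split (_ : 0 < i.+1 < p)%N); last by lia.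
by rewrite mulrnA mulrnAC -(iterfMn tD2) pE vp (iterf0 tD2) mul0rn.
Qed.

Lemma K2' y : y *+ p *+ p = 0 -> \sum_(j < p) iter j s y = 0 -> y *+ p = 0.
Proof.
move=> yp2 Sy; apply/eqP; apply/negPn/negP => nz.
have [d [hd1 hd2]] := last_nonzero nz (Hnil yp2).
move: Sy; rewrite (sum_bin sD) => Sy.
have := congr1 (iter d t) Sy; rewrite (iterf0 tD2).
have [p'' pE] : exists p'', p = p''.+2.
  by exists p.-2; have := prime_gt1 pp; lia.
have bs : forall i, (i < p'')%N -> 'C(p''.+2, i.+2) = ('C(p''.+2, i.+2) %/ p * p)%N.
  by move=> i hi; rewrite -pE; apply: binp_split; lia.
have Hn := Hnil; move: (mp) hd1 hd2 Hn bs; rewrite pE => mp' hd1 hd2 Hn bs.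
rewrite (iterfsum tD2) big_ord_recl /= bin1 (iterfMn tD2).
rewrite big_ord_recr /= big1 ?add0r.
  rewrite add0n /bump /= add1n binn mulr1n.
  rewrite -[iter d t (t _)]/(iter d t (iter p''.+1 t y)) -iterD.
  have -> : (d + p''.+1 = p'' - m + (m + d.+1))%N by lia.
  rewrite !iterD (Hn _ (_ : iter d.+1 t y *+ p''.+2 = 0)).
    by rewrite (iterf0 tD2) addr0 -(iterfMn tD2) => E; rewrite E eqxx in hd1.
  by rewrite -(iterfMn tD2) hd2.
move=> [i hi] _ /=; rewrite add0n /bump /= add1n (iterfMn tD2).
rewrite -[iter d t (t _)]/(iter d t (iter i.+1 t y)) -iterD.
rewrite (bs i hi).
rewrite mulrnA mulrnAC -(iterfMn tD2).
have -> : (d + i.+1 = i + d.+1)%N by lia.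
by rewrite iterD hd2 (iterf0 tD2) mul0rn.
Qed.

Lemma K2 N y : y *+ p ^ N = 0 -> \sum_(j < p) iter j s y = 0 -> y *+ p = 0.
Proof.
elim: N y => [|N IH] y; first by rewrite expn0 mulr1n => -> _; rewrite mul0rn.
move=> yN Sy; apply: K2' => //; apply: IH.
  by rewrite -mulrnA -expnS.
rewrite (eq_bigr (fun j : 'I_p => iter j s y *+ p)); last by move=> j _; rewrite (iterfMn sD).
by rewrite sumrMnl Sy mul0rn.
Qed.
End Key.
Lemma iter_eq_on (T : Type) (P : T -> Prop) (f g : T -> T) k v :
  (forall u, P u -> f u = g u) -> (forall u, P u -> P (g u)) -> P v ->
  iter k f v = iter k g v.
Proof.
move=> fg gP Pv.
have H : forall j, iter j f v = iter j g v /\ P (iter j g v).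
  elim=> [|j [IH1 IH2]] //=; rewrite IH1 fg //; split=> //; exact: gP.
by case: (H k).
Qed.

Section Nil.
Variables (B : zmodType) (p : nat).
Hypothesis pp : prime p.

Lemma pstep (s : B -> B) v : (forall y z, s (y + z) = s y + s z) ->
  v *+ p = 0 -> iter p s v = v + iter p (tt_ s) v.
Proof.
move=> sD vp; have tD2 := tD sD.
rewrite (iter_bin sD v (ltnSn p)) big_ord_recl /= bin0 mulr1n; congr (_ + _).
have [p' pE] : exists p', p = p'.+1 by exists p.-1; rewrite prednK // prime_gt0.
have bs : forall i, (i < p')%N -> 'C(p, i.+1) = ('C(p, i.+1) %/ p * p)%N.
  by move=> i hi; rewrite divnK // prime_dvd_bin //; lia.
move: vp bs; rewrite pE => vp bs.
rewrite big_ord_recr /= big1 ?add0r.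
  by rewrite /bump /= add1n binn mulr1n.
move=> [i hi] _ /=; rewrite /bump /= add1n (bs i hi) mulrnA mulrnAC.
rewrite add0n -[tt_ s (iter i _ v)]/(iter i.+1 (tt_ s) v).
by rewrite -(iterfMn tD2) vp (iterf0 tD2) mul0rn.
Qed.

Lemma ppow R : forall (s : B -> B) v, (forall y z, s (y + z) = s y + s z) ->
  v *+ p = 0 -> iter (p ^ R) s v = v + iter (p ^ R) (tt_ s) v.
Proof.
elim: R => [|R IH] s v sD vp.
  by rewrite expn0 /= /tt_ addrC subrK.
have tD2 := tD sD.
rewrite expnSr !iterM (IH (iter p s) v (iterfD sD p) vp); congr (_ + _).
apply: (@iter_eq_on _ (fun u => u *+ p = 0)) => //.
- move=> u up; rewrite /tt_ (pstep sD up); by rewrite addrC addKr.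
- by move=> u up; rewrite -(iterfMn tD2) up (iterf0 tD2).
Qed.
End Nil.
Lemma chain (B : finZmodType) p d (t : B -> B) N :
  prime p -> p.-nat #|B| -> (#|[set v : B | v *+ p == 0%R]| <= p ^ d)%N ->
  (forall y z, t (y + z) = t y + t z) ->
  (forall v, v *+ p = 0 -> iter N t v = 0) ->
  forall v, v *+ p = 0 -> iter d t v = 0.
Proof.
move=> pp pB cV tD tN.
set V := [set v : B | v *+ p == 0].
have tV : forall k v, v \in V -> iter k t v \in V.
  by move=> k v; rewrite !inE -(iterfMn tD) => /eqP ->; rewrite (iterf0 tD).
pose M j := [set iter j t v | v in V].
have gM j : group_set (M j).
  apply/group_setP; split.
    by apply/imsetP; exists 0; rewrite ?inE ?mul0rn ?(iterf0 tD).
  move=> _ _ /imsetP[a aV ->] /imsetP[b bV ->]; apply/imsetP; exists (a + b).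
    by move: aV bV; rewrite !inE mulrnDl => /eqP-> /eqP->; rewrite addr0.
  by rewrite (iterfD tD).
have cM j : (#|M j| = p ^ logn p #|M j|)%N.
  have pn : p.-nat #|M j|.
    apply: (pnat_dvd _ pB); rewrite -cardsT.
    exact: (@cardSg _ [group of [set: B]] (Group (gM j)) (subsetT _)).
  by have [k ->] := p_natP pn; rewrite pfactorK.
have sub j : M j.+1 \subset M j.
  apply/subsetP => _ /imsetP[v vV ->]; apply/imsetP; exists (t v) => //.
    exact: (tV 1%N).
  by rewrite -iterSr.
have stepM j : M j.+1 = t @: M j.
  by rewrite -imset_comp.
have small j : M j.+1 = M j -> (#|M j| <= 1)%N.
  move=> e.
  have ek : forall k, M (k + j)%N = M j.
    elim=> [|k IH] //; by rewrite addSn stepM IH -stepM e.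
  apply/card_le1_eqP; rewrite -(ek N) => _ _ /imsetP[a aV ->] /imsetP[b bV ->].
  have sd : forall c, c \in V -> iter j t c *+ p = 0.
    by move=> c /(tV j); rewrite inE => /eqP.
  by rewrite !iterD !tN ?sd.
have E1 j : (logn p #|M j.+1| <= logn p #|M j|)%N.
  rewrite -(@leq_exp2l p) ?prime_gt1 // -!cM; exact: subset_leq_card.
have E2 j : (logn p #|M j| = 0)%N \/ (logn p #|M j.+1| < logn p #|M j|)%N.
  have [e|ne] := eqVneq (M j.+1) (M j).
    left; move: (small j e); rewrite {1}cM.
    case: (logn p #|M j|) => // k; rewrite expnS => h; have := prime_gt1 pp.
    have : (0 < p ^ k)%N by rewrite expn_gt0 prime_gt0.
    nia.
  right; rewrite -(@ltn_exp2l p) ?prime_gt1 // -!cM; apply: proper_card.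
  by rewrite properEneq ne sub.
have E0 : (logn p #|M 0| <= d)%N.
  rewrite -(@leq_exp2l p) ?prime_gt1 // -cM; apply: leq_trans cV.
  exact: leq_imset_card.
have Ed : forall j, (logn p #|M j| <= d - j)%N.
  elim=> [|j IH]; first by rewrite subn0.
  by case: (E2 j) => h; have := E1 j; lia.
move=> v vp; have vV : v \in V by rewrite inE vp.
have : (#|M d| <= 1)%N by rewrite cM; have := Ed d; rewrite subnn leqn0 => /eqP->.
move/card_le1_eqP => h; apply: h.
  by apply/imsetP; exists 0; rewrite ?inE ?mul0rn ?(iterf0 tD).
by apply/imsetP; exists v.
Qed.
Section BraceCore.
Variables (B : finZmodType) (mul : B -> B -> B) (one : B) (inv : B -> B).
Definition brT (_ : is_left_brace mul one inv) : Type := B.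
Variable Hb : is_left_brace mul one inv.
HB.instance Definition _ := Finite.on (brT Hb).
Lemma brA : associative (mul : brT Hb -> _ -> _). Proof. by have [] := Hb. Qed.
Lemma br1 : left_id (one : brT Hb) mul. Proof. by have [] := Hb. Qed.
Lemma brV : left_inverse (one : brT Hb) inv mul.
Proof. by have [_ _ _ [? ?] _] := Hb. Qed.
HB.instance Definition _ := Finite_isGroup.Build (brT Hb) brA br1 brV.

Lemma one0 : one = 0.
Proof.
have [_ h1 _ _ hD] := Hb; have := hD one 0 0.
by rewrite !h1 !add0r.
Qed.

Definition lam a y := mul a y - a.

Lemma lamD a y z : lam a (y + z) = lam a y + lam a z.
Proof.
have [_ _ _ _ hD] := Hb; rewrite /lam.
have -> : mul a (y + z) = mul a y + mul a z - a.
  by rewrite -hD addrK.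
by rewrite addrACA -!addrA.
Qed.

Lemma lam1 y : lam one y = y.
Proof. by have [_ h1 _ _ _] := Hb; rewrite /lam h1 one0 subr0. Qed.

Lemma lamM a b y : lam a (lam b y) = lam (mul a b) y.
Proof.
have [hA _ _ _ _] := Hb.
rewrite [lam b y]/lam lamD (sN (lamD a)) /lam hA.
by rewrite opprB addrA subrK.
Qed.

Lemma powG (x : brT Hb) k : iter k (mul x) one = (x ^+ k)%g.
Proof. by elim: k => //= k ->; rewrite expgS. Qed.

Lemma iter_lam (x : B) k y : iter k (lam x) y = lam (iter k (mul x) one) y.
Proof.
elim: k y => [|k IH] y /=; first by rewrite lam1.
by rewrite IH lamM.
Qed.

Lemma pow_sum (x : B) k : iter k (mul x) one = \sum_(j < k) iter j (lam x) x.
Proof.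
elim: k => [|k IH]; first by rewrite big_ord0 one0.
rewrite /= IH big_ord_recl /=.
have -> : mul x (\sum_(i < k) iter i (lam x) x) = x + lam x (\sum_(i < k) iter i (lam x) x).
  by rewrite /lam addrC subrK.
by rewrite (fsum (lamD x)).
Qed.
Lemma cardbr : #|[set: brT Hb]| = #|B|. Proof. by rewrite cardsT. Qed.

Lemma core_order p d : prime p -> p.-nat #|B| -> (d + 2 <= p)%N ->
  (#|[set v : B | v *+ p == 0%R]| <= p ^ d)%N ->
  forall x : B, #[x : brT Hb]%g = #[x]%g.
Proof.
move=> pp pB dp cV.
have [R cB] := p_natP pB.
have ordB : forall y : B, (#[y]%g %| p ^ R)%N.
  by move=> y; rewrite -cB -cardsT; apply: order_dvdG; rewrite inE.
have ordG : forall y : brT Hb, (#[y]%g %| p ^ R)%N.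
  by move=> y; rewrite -cB -cardbr; apply: order_dvdG; rewrite inE.
have expB : forall y : B, y *+ p ^ R = 0.
  by move=> y; apply/eqP; have := ordB y; rewrite order_dvdn.
have expG : forall y : brT Hb, (y ^+ (p ^ R)%N)%g = 1%g.
  by move=> y; apply/eqP; rewrite -order_dvdn.
have Hnil : forall x : B, forall v, v *+ p = 0 -> iter d (tt_ (lam x)) v = 0.
  move=> x; apply: (chain pp pB cV (tD (lamD x)) (N := (p ^ R)%N)).
  move=> v vp; have := ppow pp R (lamD x) vp.
  rewrite iter_lam (powG (x : brT Hb)) expG lam1.
  by move/(congr1 (fun z => z - v)); rewrite subrr addrC addKr.
have SK : forall x y : B, (\sum_(j < p) iter j (lam x) y = 0) <-> (y *+ p = 0).
  move=> x y; split.
    exact: (K2 (lamD x) pp dp (Hnil x) (expB y)).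
  exact: (K1 (lamD x) pp dp (Hnil x)).
have main : forall n (x : B), (#[x]%g <= n)%N -> #[x : brT Hb]%g = #[x]%g.
  elim=> [|n IH] x; first by rewrite leqNgt order_gt0.
  move=> xn.
  have [-> | nz] := eqVneq x 0.
    have h1 : #[(0 : brT Hb)]%g = 1%N.
      by apply/eqP; rewrite order_eq1; apply/eqP; exact: (esym one0).
    have h2 : #[(0 : B)]%g = 1%N by apply/eqP; rewrite order_eq1.
    by rewrite h1 h2.
  have [f _ ef] := dvdn_pfactor _ _ pp (ordB x).
  have [e _ ee] := dvdn_pfactor _ _ pp (ordG x).
  have f0 : (0 < f)%N.
    case: f ef => // /eqP; rewrite expn0 order_eq1 => /eqP ex.
    by rewrite ex eqxx in nz.
  have e0 : (0 < e)%N.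
    case: e ee => // /eqP; rewrite expn0 order_eq1 => /eqP ex.
    move: nz; rewrite ex; change (one != 0 -> (0 < 0)%N); by rewrite one0 eqxx.
  pose x' := ((x : brT Hb) ^+ p)%g.
  have x'E : (x' : B) = \sum_(j < p) iter j (lam x) x.
    by rewrite /x' -powG pow_sum.
  have addc : forall k, ((x' : B) *+ k == 0) = (x *+ (k * p) == 0).
    move=> k; rewrite x'E -sumrMnl.
    rewrite (eq_bigr (fun j : 'I_p => iter j (lam x) (x *+ k))); last first.
      by move=> j _; rewrite (iterfMn (lamD x)).
    apply/eqP/eqP; first by move/SK; rewrite mulrnA.
    by rewrite mulrnA => /SK.
  have ordx' : #[(x' : B)]%g = (p ^ f.-1)%N.
    apply/eqP; rewrite eqn_dvd; apply/andP; split.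
      rewrite order_dvdn; change ((x' : B) *+ p ^ f.-1 == 0).
      rewrite addc -expnSr prednK //; apply/eqP.
      change ((x ^+ (p ^ f)%N)%g = 1%g); apply/eqP; rewrite -order_dvdn ef.
      exact: dvdnn.
    rewrite -(@dvdn_pmul2r p) ?prime_gt0 // -expnSr prednK // -ef.
    rewrite order_dvdn; change (x *+ (order (x' : B) * p)%N == 0).
    rewrite -addc; apply/eqP; exact: (expg_order (x' : B)).
  have lt : (#[(x' : B)]%g <= n)%N.
    rewrite ordx'; apply: (@leq_trans (#[x]%g).-1); last by rewrite -ltnS (ltn_predK (order_gt0 x)).
    rewrite ef -ltnS (ltn_predK (_ : 0 < p ^ f)%N) ?expn_gt0 ?prime_gt0 //.
    by rewrite ltn_exp2l ?prime_gt1 // prednK.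
  have := IH _ lt; rewrite ordx' => IHx.
  have : #[x']%g = (p ^ e.-1)%N.
    rewrite /x' orderXgcd ee; have -> : gcdn (p ^ e) p = p.
      by apply/gcdn_idPr; rewrite dvdn_exp.
    by rewrite -{1}(prednK e0) expnSr mulnK ?prime_gt0.
  rewrite IHx => /(expnI (prime_gt1 pp)) efq.
  by rewrite ef ee -(prednK e0) -(prednK f0) efq.
by move=> x; apply: (main #[x]%g).
Qed.
End BraceCore.
Lemma is_order_iff (gT : finGroupType) (x : gT) n :
  is_order (@mulg gT) 1%g x n <-> n = #[x]%g.
Proof.
rewrite /is_order; split.
  case=> n0; rewrite iter_mulg_1 => xn min.
  apply/eqP; rewrite eqn_leq; apply/andP; split.
    by apply: min; rewrite ?order_gt0 // iter_mulg_1 expg_order.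
  by apply: dvdn_leq => //; rewrite order_dvdn xn.
move=> ->; split; rewrite ?order_gt0 ?iter_mulg_1 ?expg_order //.
move=> k k0; rewrite iter_mulg_1 => /eqP; rewrite -order_dvdn => h.
exact: dvdn_leq.
Qed.

Lemma brace_orders (B : finZmodType) mul one inv (Hb : is_left_brace mul one inv) p d :
  prime p -> p.-nat #|B| -> (d + 2 <= p)%N ->
  (#|[set v : B | v *+ p == 0%R]| <= p ^ d)%N ->
  forall (x : B) n, is_order mul one x n <-> is_order +%R 0 x n.
Proof.
move=> pp pB dp cV x n.
have h1 := is_order_iff (x : brT Hb) n.
have h2 := is_order_iff (x : B) n.
rewrite (core_order Hb pp pB dp cV) in h1.
split => h.
  by apply/h2; apply/h1.
by apply/h1; apply/h2.
Qed.
Section Iso.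
Variables (B : finZmodType) (p m : nat) (a : 'I_m -> nat) (f : B -> 'I_m -> nat).
Hypotheses (pp : prime p) (a1 : forall i, (1 <= a i)%N)
  (fb : forall x i, (f x i < p ^ a i)%N)
  (fD : forall x y i, f (x + y) i = ((f x i + f y i) %% p ^ a i)%N)
  (finj : forall x y, f x =1 f y -> x = y).

Lemma f0 i : f 0 i = 0%N.
Proof.
have h := fD 0 0 i; rewrite addr0 in h.
have : (f 0%R i + 0 == f 0%R i + f 0%R i %[mod p ^ a i])%N.
  by rewrite addn0 {1}h modn_mod.
by rewrite eqn_modDl mod0n modn_small // eq_sym => /eqP.
Qed.

Lemma fMn x k i : f (x *+ k) i = (k * f x i %% p ^ a i)%N.
Proof.
elim: k => [|k IH]; first by rewrite mulr0n f0 mul0n mod0n.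
by rewrite mulrS fD IH modnDmr mulSn.
Qed.

Lemma iso_expo (x : B) : x *+ p ^ (\sum_(i < m) a i) = 0.
Proof.
apply: finj => i; rewrite fMn f0; apply/eqP; rewrite -[_ == 0%N]/(dvdn _ _).
apply: dvdn_mulr; rewrite dvdn_exp2l // (bigD1 i) //=; exact: leq_addr.
Qed.

Lemma iso_pnat : p.-nat #|B|.
Proof.
have B0 : (0 < #|B|)%N by rewrite -cardsT cardG_gt0.
apply/pnatP => // q qp qd.
have qd' : (q %| #|[set: B]|)%N by rewrite cardsT.
have [y _ oy] := @Cauchy _ q [group of [set: B]] qp qd'.
have : (#[y]%g %| p ^ (\sum_(i < m) a i))%N.
  by rewrite order_dvdn; apply/eqP; exact: iso_expo.
by rewrite oy Euclid_dvdX // dvdn_prime2 // => /andP[/eqP -> _]; rewrite inE.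
Qed.

Lemma iso_cardV : (#|[set v : B | v *+ p == 0%R]| <= p ^ m)%N.
Proof.
set V := [set v : B | v *+ p == 0%R].
have key : forall y, y \in V -> forall i,
    f y i = (f y i %/ p ^ (a i).-1 * p ^ (a i).-1)%N /\ (f y i %/ p ^ (a i).-1 < p)%N.
  move=> y; rewrite inE => /eqP yp i.
  have pe : (p ^ a i = p ^ (a i).-1 * p)%N by rewrite -expnSr prednK.
  have pg : (0 < p ^ (a i).-1)%N by rewrite expn_gt0 prime_gt0.
  split; last by rewrite ltn_divLR // mulnC -pe.
  rewrite divnK //; have := fMn y p i; rewrite yp f0 => /esym/eqP.
  by rewrite -[_ == 0%N]/(dvdn _ _) pe [(p * _)%N]mulnC dvdn_pmul2r ?prime_gt0.
pose G (y : B) : {ffun 'I_m -> 'I_p.-1.+1} := [ffun i => inord (f y i %/ p ^ (a i).-1)].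
have pE : p.-1.+1 = p by rewrite prednK ?prime_gt0.
have : (#|V| <= #|{ffun 'I_m -> 'I_p.-1.+1}|)%N.
  apply: (@leq_card_in _ _ G) => y z yV zV /ffunP e.
  apply: finj => i; have := e i; rewrite !ffunE => /(congr1 (@nat_of_ord _)).
  have [ey ly] := key y yV i; have [ez lz] := key z zV i.
  rewrite !inordK ?pE // => eq; by rewrite ey ez eq.
by rewrite card_ffun !card_ord pE.
Qed.
End Iso.
Lemma count_split k (s : seq nat) :
  count (fun y => k < y)%N s = (count_mem k.+1 s + count (fun y => k.+1 < y)%N s)%N.
Proof.
elim: s => //= y s ->; lia.
Qed.

Lemma counts_perm (s1 s2 : seq nat) : all (leq 1) s1 -> all (leq 1) s2 ->
  (forall n, count (fun k => n < k)%N s1 = count (fun k => n < k)%N s2) ->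
  perm_eq s1 s2.
Proof.
move=> a1 a2 c; rewrite /perm_eq; apply/allP => x _ /=; apply/eqP.
case: x => [|k].
  have z : forall s : seq nat, all (leq 1) s -> count_mem 0%N s = 0%N.
    move=> s as1; apply/eqP; rewrite -leqn0 leqNgt -has_count; apply/hasPn.
    by move=> y /(allP as1); case: y.
  by rewrite !z.
have := c k; rewrite (count_split k s1) (count_split k s2) (c k.+1).
by move=> /eqP; rewrite eqn_add2r => /eqP.
Qed.
Section GS.
Local Open Scope group_scope.
Lemma Ohm_card_ab (gT : finGroupType) (p : nat) k :
  p.-group [set: gT] -> abelian [set: gT] ->
  #|'Ohm_k([set: gT])| = #|[set x : gT | (#[x] %| p ^ k)%N]|.
Proof.
move=> pG cG; rewrite (OhmEabelian pG (abelianS (Ohm_sub _ _) cG)).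
by apply: eq_card => x; rewrite !inE order_dvdn.
Qed.

Lemma abtype_eq (gT1 gT2 : finGroupType) (p : nat) (phi : gT1 -> gT2) :
  prime p -> bijective phi -> (forall x, #[phi x]%g = #[x]%g) ->
  p.-group [set: gT1] -> p.-group [set: gT2] ->
  abelian [set: gT1] -> abelian [set: gT2] ->
  abelian_type [set: gT1] = abelian_type [set: gT2].
Proof.
move=> pp [psi K1 K2] oph pG1 pG2 cG1 cG2.
have cardO : forall k, #|'Ohm_k([set: gT1])| = #|'Ohm_k([set: gT2])|.
  move=> k; rewrite (Ohm_card_ab k pG1 cG1) (Ohm_card_ab k pG2 cG2) -(card_imset _ (can_inj K1)).
  apply: eq_card => y; apply/imsetP/idP.
    by case=> x; rewrite !inE => h ->; rewrite oph.
  rewrite inE => h; exists (psi y); last by rewrite K2.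
  by rewrite inE -oph K2.
have [b1 d1 t1] := abelian_structure cG1.
have [b2 d2 t2] := abelian_structure cG2.
have pw : forall (gT : finGroupType) (b : seq gT), p.-group [set: gT] ->
    all [pred m | 1 < m]%N (map order b) ->
    all (leq 1) (map (logn p \o order) b) /\ map order b = map (expn p) (map (logn p \o order) b).
  move=> gT b pG a1; split.
    apply/allP => _ /mapP[x xb ->] /=.
    have h : (1 < #[x]%g)%N by apply: (allP a1); apply: map_f.
    have e : (p ^ logn p #[x] = #[x])%N.
      by rewrite -p_part part_pnat_id //; apply: mem_p_elt pG _; rewrite inE.
    by case E: (logn p #[x]) => [|j] //; move: h; rewrite -e E expn0.
  rewrite -map_comp; apply: eq_map => x /=.
  by rewrite -p_part part_pnat_id //; apply: mem_p_elt pG _; rewrite inE.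
have a1 : all [pred m | 1 < m]%N (map order b1) by rewrite t1 abelian_type_gt1.
have a2 : all [pred m | 1 < m]%N (map order b2) by rewrite t2 abelian_type_gt1.
have [l1 e1] := pw _ _ pG1 a1.
have [l2 e2] := pw _ _ pG2 a2.
have pl : perm_eq (map (logn p \o order) b1) (map (logn p \o order) b2).
  apply: counts_perm => // n; rewrite !count_map.
  have -> : count (preim (logn p \o order) (fun k => n < k)%N) b1
          = count [pred x | n < logn p #[x]]%N b1 by [].
  have -> : count (preim (logn p \o order) (fun k => n < k)%N) b2
          = count [pred x | n < logn p #[x]]%N b2 by [].
  rewrite (count_logn_dprod_cycle p n d1) (count_logn_dprod_cycle p n d2).
  by rewrite -!divgS ?Ohm_leq // !cardO.
rewrite -t1 -t2; apply: (@sorted_eq _ geq).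
- by move=> x y z h1 h2; apply: leq_trans h2 h1.
- by move=> x y /andP[h1 h2]; apply/eqP; rewrite eqn_leq; apply/andP; split.
- by rewrite t1 abelian_type_sorted.
- by rewrite t2 abelian_type_sorted.
by rewrite e1 e2 perm_map.
Qed.
End GS.
Lemma brace_iso (B : finZmodType) mul one inv (Hb : is_left_brace mul one inv) p d :
  prime p -> p.-nat #|B| -> (d + 2 <= p)%N ->
  (#|[set v : B | v *+ p == 0%R]| <= p ^ d)%N -> commutative mul ->
  exists f : B -> B, bijective f /\ forall x y : B, f (mul x y) = f x + f y.
Proof.
move=> pp pB dp cV comm.
pose phi := fun x : brT Hb => (x : B).
have oph : forall x : brT Hb, #[phi x]%g = #[x]%g.
  by move=> x; rewrite /phi (core_order Hb pp pB dp cV).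
have bphi : bijective phi by exists (fun y : B => (y : brT Hb)).
have pG1 : (p.-group [set: brT Hb])%g by rewrite /pgroup cardbr.
have pG2 : (p.-group [set: B])%g by rewrite /pgroup cardsT.
have cG1 : abelian [set: brT Hb].
  apply/centsP => x _ y _; exact: comm.
have cG2 : abelian [set: B].
  apply/centsP => x _ y _; exact: addrC.
have iso : ([set: brT Hb] \isog [set: B])%g.
  by rewrite eq_abelian_type_isog // (abtype_eq pp bphi oph pG1 pG2 cG1 cG2).
have [f injf imf] := isogP iso.
exists (fun x : B => f (x : brT Hb)); split.
  apply: injF_bij => x y e; apply: (injmP injf) => //; rewrite inE.
move=> x y; exact: (morphM f (in_setT (x : brT Hb)) (in_setT (y : brT Hb))).
Qed.
Theorem theorem2p5 :
  (forall (p m : nat) (a : 'I_m -> nat) (B : finZmodType)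
          (mul : B -> B -> B) (one : B) (inv : B -> B),
      prime p -> (0 < m)%N -> (m + 2 <= p)%N ->
      (forall i, (1 <= a i)%N) ->
      (forall i j : 'I_m, (i <= j)%N -> (a i <= a j)%N) ->
      add_iso_prod_cyclic B p a ->
      is_left_brace mul one inv ->
      (forall (x : B) (n : nat), is_order mul one x n <-> is_order +%R 0 x n)
      /\ (commutative mul ->
          exists f : B -> B, bijective f /\
            forall x y : B, f (mul x y) = f x + f y))
  /\
  (forall (p n : nat) (B : finZmodType)
          (mul : B -> B -> B) (one : B) (inv : B -> B),
      prime p -> #|B| = (p ^ n)%N -> (n + 2 <= p)%N ->
      is_left_brace mul one inv ->
      forall (x : B) (k : nat), is_order mul one x k <-> is_order +%R 0 x k).
Proof.
split.
  move=> p m a B mul one inv pp m0 mp a1 amono [f [fb fD finj _]] Hb.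
  have pB : p.-nat #|B| by apply: (iso_pnat (f := f)).
  have cV : (#|[set v : B | v *+ p == 0%R]| <= p ^ m)%N.
    by apply: (iso_cardV (f := f)).
  split; first exact: (brace_orders Hb pp pB mp cV).
  exact: (brace_iso Hb pp pB mp cV).
move=> p n B mul one inv pp cB np Hb.
apply: (brace_orders Hb pp _ np).
  by rewrite cB pnatX pnat_id.
by rewrite -cB; apply: leq_trans (max_card _) _.
Qed.
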